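(* Let $\rho$ be a density operator (positive, trace one, on a finite-dimensional or separable Hilbert space) with eigenvalues $\lambda_1\ge\lambda_2\ge\cdots$ listed in nonincreasing order with multiplicity, and for a positive integer $D$ let $\epsilon(D)=\sum_{i\ge D+1}\lambda_i$. Then for every $0<\alpha<1$, $$\epsilon(D)\le \exp\!\Big(\frac{1-\alpha}{\alpha}\Big(S^\alpha(\rho)-\log\frac{D}{1-\alpha}\Big)\Big),$$ i.e. $\log\epsilon(D)\le\frac{1-\alpha}{\alpha}\big(S^\alpha(\rho)-\log\frac{D}{1-\alpha}\big)$ whenever $\epsilon(D)>0$. *)

(* Defs.v *)
From Stdlib Require Import Reals.
Open Scope R_scope.

(* Real power x^a for x >= 0, with the convention 0^a = 0 (a > 0).
   (Stdlib's Rpower 0 a = exp (a * ln 0) = 1, which is not what we want.) *)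
Definition rpow (x a : R) : R := if Rlt_dec 0 x then Rpower x a else 0.

(* Spectrum of a density operator: eigenvalues lam 0 >= lam 1 >= ... (0-indexed,
   with multiplicity; finite-dimensional case = padded with zeros),
   nonnegative and summing to 1. *)
Definition density_spectrum (lam : nat -> R) : Prop :=
  (forall i, 0 <= lam i) /\
  (forall i, lam (S i) <= lam i) /\
  infinite_sum lam 1.

(* Renyi entropy S^alpha(rho) = 1/(1-alpha) * log Tr rho^alpha, where
   T = Tr rho^alpha = sum_i lam_i^alpha. *)
Definition renyi_entropy (alpha T : R) : R := ln T / (1 - alpha).

(* Main.v *)
Require Import Defs.
From Stdlib Require Import Reals Lra Lia.
Open Scope R_scope.

Lemma exp_le' x y : x <= y -> exp x <= exp y.
Proof. intros [H|H]. - left; apply exp_increasing; auto. - subst; lra. Qed.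

Lemma ln_le' x y : 0 < x -> x <= y -> ln x <= ln y.
Proof. intros Hx [H|H]. - left; apply ln_increasing; auto. - subst; lra. Qed.

Lemma ln_div a b : 0 < a -> 0 < b -> ln (a / b) = ln a - ln b.
Proof. intros. unfold Rdiv. rewrite ln_mult, ln_Rinv; auto. apply Rinv_0_lt_compat; auto. Qed.

Lemma exp_convex a u v : 0 <= a <= 1 ->
  exp ((1 - a) * u + a * v) <= (1 - a) * exp u + a * exp v.
Proof.
  intros Ha. set (m := (1 - a) * u + a * v).
  assert (E1 : exp u = exp m * exp (u - m)) by (rewrite <- exp_plus; f_equal; ring).
  assert (E2 : exp v = exp m * exp (v - m)) by (rewrite <- exp_plus; f_equal; ring).
  pose proof (exp_ineq1_le (u - m)). pose proof (exp_ineq1_le (v - m)).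
  pose proof (exp_pos m).
  rewrite E1, E2.
  assert (Hk : (1 - a) * (exp m * (1 + (u - m))) + a * (exp m * (1 + (v - m))) = exp m)
    by (unfold m; ring).
  assert (0 <= 1 - a) by lra.
  apply Rle_trans with ((1 - a) * (exp m * (1 + (u - m))) + a * (exp m * (1 + (v - m)))).
  - lra.
  - apply Rplus_le_compat; apply Rmult_le_compat_l; try lra;
    apply Rmult_le_compat_l; lra.
Qed.

Lemma mono (lam : nat -> R) : (forall i, lam (S i) <= lam i) ->
  forall i j, (i <= j)%nat -> lam j <= lam i.
Proof.
  intros H i j Hij. induction Hij. lra. specialize (H m). lra.
Qed.

Lemma sum_lb (f : nat -> R) c n : (forall i, (i <= n)%nat -> c <= f i) ->
  INR (S n) * c <= sum_f_R0 f n.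
Proof.
  induction n; intros H.
  - simpl. specialize (H 0%nat (le_n 0)). lra.
  - rewrite S_INR. simpl sum_f_R0.
    assert (c <= f (S n)) by (apply H; lia).
    assert (INR (S n) * c <= sum_f_R0 f n) by (apply IHn; intros; apply H; lia).
    lra.
Qed.

Lemma sum_scal_le (f h : nat -> R) a N : (forall i, a * f i <= h i) ->
  a * sum_f_R0 f N <= sum_f_R0 h N.
Proof.
  intros H; induction N; simpl. apply H.
  specialize (H (S N)). lra.
Qed.

Lemma sum_split (g : nat -> R) d N :
  sum_f_R0 g (S d + N) = sum_f_R0 g d + sum_f_R0 (fun i => g (i + S d)%nat) N.
Proof.
  induction N.
  - rewrite Nat.add_0_r. simpl. reflexivity.
  - rewrite Nat.add_succ_r.
    change (sum_f_R0 g (S (S d + N))) with (sum_f_R0 g (S d + N) + g (S (S d + N))).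
    change (sum_f_R0 (fun i => g (i + S d)%nat) (S N)) with
      (sum_f_R0 (fun i => g (i + S d)%nat) N + g (S N + S d)%nat).
    rewrite IHN.
    replace (S N + S d)%nat with (S (S d + N)) by lia. ring.
Qed.

Lemma cv_shift (u : nat -> R) l k : Un_cv u l -> Un_cv (fun n => u (k + n)%nat) l.
Proof.
  intros H e He. destruct (H e He) as [N HN]. exists N. intros n Hn. apply HN. lia.
Qed.

Lemma cv_affine (u : nat -> R) l a b : Un_cv u l -> Un_cv (fun n => a + b * u n) (a + b * l).
Proof.
  intros H. apply CV_plus.
  - intros e He. exists 0%nat. intros. unfold R_dist. rewrite Rminus_diag, Rabs_R0. lra.
  - apply CV_mult; auto. intros e He. exists 0%nat. intros. unfold R_dist.
    rewrite Rminus_diag, Rabs_R0. lra.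
Qed.

Theorem lemma2 (lam : nat -> R) (D : nat) (alpha T eps : R) :
  density_spectrum lam ->
  (1 <= D)%nat ->
  0 < alpha < 1 ->
  infinite_sum (fun i => rpow (lam i) alpha) T ->
  infinite_sum (fun i => lam (i + D)%nat) eps ->
  eps <= exp ((1 - alpha) / alpha *
              (renyi_entropy alpha T - ln (INR D / (1 - alpha)))).
Proof.
  intros [Hpos [Hdec Hsum]] HD Ha HT He.
  destruct D as [|d]; [lia|].
  pose proof (exp_pos ((1 - alpha) / alpha *
              (renyi_entropy alpha T - ln (INR (S d) / (1 - alpha))))) as Hexp.
  set (x := lam d).
  assert (Htail : forall i, lam (i + S d)%nat <= x)
    by (intro i; apply mono; auto; lia).
  assert (Hx0 : 0 <= x) by apply Hpos.
  destruct (Rle_lt_or_eq 0 x Hx0) as [Hx|Hx].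
  2:{
    assert (eps <= 0).
    { apply (@Rle_cv_lim (fun N => sum_f_R0 (fun i => lam (i + S d)%nat) N) (fun _ => 0)); auto.
      - intro n. apply Rle_trans with (sum_f_R0 (fun _ => 0) n).
        + apply sum_Rle. intros. rewrite Hx. apply Htail.
        + right. induction n; simpl; [ring| rewrite IHn; ring].
      - intros e He'. exists 0%nat. intros. unfold R_dist. rewrite Rminus_diag, Rabs_R0. lra. }
    lra. }
  set (g := fun i => rpow (lam i) alpha).
  set (c := exp ((alpha - 1) * ln x)).
  assert (Hg_head : forall i, (i <= d)%nat -> exp (alpha * ln x) <= g i).
  { intros i Hi. unfold g, rpow. assert (x <= lam i) by (apply mono; auto).
    destruct (Rlt_dec 0 (lam i)); [|lra]. unfold Rpower. apply exp_le'.
    apply Rmult_le_compat_l; [lra|]. apply ln_le'; auto. }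
  assert (Hg_tail : forall i, c * lam (i + S d)%nat <= g (i + S d)%nat).
  { intro i. unfold g, rpow, c. specialize (Htail i).
    destruct (Rlt_dec 0 (lam (i + S d)%nat)) as [Hl|Hl].
    - unfold Rpower. rewrite <- (exp_ln (lam (i + S d)%nat)) at 1 by auto.
      rewrite <- exp_plus. apply exp_le'.
      pose proof (ln_le' _ _ Hl Htail). nra.
    - assert (lam (i + S d)%nat = 0) by (pose proof (Hpos (i + S d)%nat); lra).
      rewrite H. lra. }
  assert (Hmain : INR (S d) * exp (alpha * ln x) + c * eps <= T).
  { apply (@Rle_cv_lim
      (fun N => INR (S d) * exp (alpha * ln x) + c * sum_f_R0 (fun i => lam (i + S d)%nat) N)
      (fun N => sum_f_R0 g (S d + N))).
    - intro N. rewrite sum_split. apply Rplus_le_compat.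
      + apply sum_lb. auto.
      + apply sum_scal_le. auto.
    - apply cv_affine. exact He.
    - apply (cv_shift (fun n => sum_f_R0 g n)). exact HT. }
  destruct (Rle_or_lt eps 0) as [He0|He0]; [lra|].
  set (Dr := INR (S d)).
  assert (HDr : 0 < Dr) by (unfold Dr; apply lt_0_INR; lia).
  (* AM-GM *)
  set (u := ln (Dr * x / (1 - alpha))). set (v := ln (eps / alpha)).
  assert (Hcv := exp_convex alpha u v (conj (Rlt_le _ _ (proj1 Ha)) (Rlt_le _ _ (proj2 Ha)))).
  assert (Hdx : 0 < Dr * x / (1 - alpha)) by (apply Rdiv_lt_0_compat; nra).
  assert (Hea : 0 < eps / alpha) by (apply Rdiv_lt_0_compat; lra).
  unfold u, v in Hcv. rewrite !exp_ln in Hcv by auto.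
  replace ((1 - alpha) * (Dr * x / (1 - alpha)) + alpha * (eps / alpha)) with (Dr * x + eps) in Hcv
    by (field; lra).
  assert (Hlhs : Dr * exp (alpha * ln x) + c * eps = c * (Dr * x + eps)).
  { assert (Hcx : exp ((alpha - 1) * ln x) * exp (ln x) = exp (alpha * ln x))
      by (rewrite <- exp_plus; f_equal; ring).
    rewrite exp_ln in Hcx by auto. fold c in Hcx. rewrite <- Hcx. ring. }
  assert (Hc : 0 < c) by apply exp_pos.
  assert (HTlb : c * exp ((1 - alpha) * ln (Dr * x / (1 - alpha)) + alpha * ln (eps / alpha)) <= T).
  { apply Rle_trans with (c * (Dr * x + eps)).
    - apply Rmult_le_compat_l; [lra|]. exact Hcv.
    - rewrite <- Hlhs. exact Hmain. }
  unfold c in HTlb. rewrite <- exp_plus in HTlb.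
  assert (Hlnal : ln alpha < 0) by (rewrite <- ln_1; apply ln_increasing; lra).
  rewrite ln_div in HTlb by nra. rewrite ln_div in HTlb by lra. rewrite ln_mult in HTlb by lra.
  set (q := ln (Dr / (1 - alpha))).
  assert (Hq : q = ln Dr - ln (1 - alpha)) by (unfold q; apply ln_div; lra).
  assert (HTpos : 0 < T) by (pose proof (exp_pos ((alpha - 1) * ln x +
       ((1 - alpha) * (ln Dr + ln x - ln (1 - alpha)) + alpha * (ln eps - ln alpha)))); lra).
  assert (Hkey : alpha * ln eps + (1 - alpha) * q <= ln T).
  { rewrite <- (ln_exp (alpha * ln eps + (1 - alpha) * q)). apply ln_le'; [apply exp_pos|].
    eapply Rle_trans; [|exact HTlb]. apply exp_le'. rewrite Hq. nra. }
  rewrite <- (exp_ln eps) at 1 by auto. apply exp_le'.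
  unfold renyi_entropy. fold Dr. fold q.
  apply Rmult_le_reg_l with alpha; [lra|].
  replace (alpha * ((1 - alpha) / alpha * (ln T / (1 - alpha) - q))) with (ln T - (1 - alpha) * q)
    by (field; lra).
  lra.
Qed.
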